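(* For every real $\beta\ge 1$ and every integer $n>0$, $\sum_{i=0}^{n}\Big(2^{i}\beta^{2^i}\prod_{j=i}^{n}(1-2^j)\Big)<0.$ *)

(* Defs.v *)
From mathcomp Require Import all_boot all_order all_algebra.

(* Main.v *)
Require Import Defs.
From mathcomp Require Import all_boot all_order all_algebra.
From mathcomp Require Import ring lra zify.
Import Order.TTheory GRing.Theory Num.Theory.
Local Open Scope ring_scope.

Section S.
Variable R : realFieldType.

Definition pos (p : {poly R}) := forall k, 0 <= p`_k.

Lemma posD p q : pos p -> pos q -> pos (p + q).
Proof. by move=> hp hq k; rewrite coefD addr_ge0. Qed.
Lemma posM p q : pos p -> pos q -> pos (p * q).
Proof. by move=> hp hq k; rewrite coefM; apply: sumr_ge0 => j _; apply: mulr_ge0. Qed.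
Lemma posZ c p : 0 <= c -> pos p -> pos (c *: p).
Proof. by move=> hc hp k; rewrite coefZ mulr_ge0. Qed.
Lemma pos1 : pos 1.
Proof. by move=> k; rewrite coef1; case: (k == 0%N). Qed.
Lemma posX : pos 'X.
Proof. by move=> k; rewrite coefX; case: (k == 1%N). Qed.
Lemma posXn p n : pos p -> pos (p ^+ n).
Proof. move=> hp; elim: n => [|n IH]; first exact: pos1. by rewrite exprS; apply: posM. Qed.
Lemma pos_comp p q : pos p -> pos q -> pos (p \Po q).
Proof.
move=> hp hq k; rewrite coef_comp_poly; apply: sumr_ge0 => i _.
by apply: mulr_ge0 => //; apply: posXn.
Qed.
Lemma pos_horner p x : pos p -> 0 <= x -> p`_0 <= p.[x].
Proof.
move=> hp hx; rewrite horner_coef.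
case E: (size p) => [|s].
  by rewrite big_ord0 nth_default // E.
rewrite big_ord_recl /= expr0 mulr1 lerDl; apply: sumr_ge0 => i _.
by apply: mulr_ge0 => //; apply: exprn_ge0.
Qed.

Definition sh (p : {poly R}) := p \Po ('X + 1).
Definition NN p := pos (sh p).

Lemma sh_horner p x : (sh p).[x] = p.[x + 1].
Proof. by rewrite /sh horner_comp hornerD hornerX hornerC. Qed.

Lemma NN_horner p y : NN p -> 1 <= y -> p.[1] <= p.[y].
Proof.
move=> hp hy.
have -> : p.[y] = (sh p).[y - 1] by rewrite sh_horner subrK.
have -> : p.[1] = (sh p)`_0 by rewrite -horner_coef0 sh_horner add0r.
by apply: pos_horner => //; rewrite subr_ge0.
Qed.

Lemma NN_compX2 p : NN p -> NN (p \Po 'X^2).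
Proof.
move=> hp; rewrite /NN.
have -> : sh (p \Po 'X^2) = sh p \Po ('X^2 + 'X + 'X).
  rewrite /sh -!comp_polyA comp_Xn_poly comp_polyD comp_polyX comp_polyC.
  congr (p \Po _); ring.
apply: pos_comp => //; apply: posD; first apply: posD.
- by apply: posXn; apply: posX.
- exact: posX.
- exact: posX.
Qed.

Lemma NN_deriv p : 0 <= p.[1] -> NN (p^`()) -> NN p.
Proof.
move=> h1 hd [|k].
  by rewrite -horner_coef0 sh_horner add0r.
have := hd k.
have -> : sh (p^`()) = (sh p)^`().
  by rewrite /sh deriv_comp derivD derivX derivC addr0 mulr1.
by rewrite coef_deriv pmulrn_lge0.
Qed.

Lemma NN_Z k p : 0 <= k -> NN p -> NN (k *: p).
Proof. by move=> hk hp; rewrite /NN /sh comp_polyZ; apply: posZ. Qed.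

Definition c m i : R := 2^+i * \prod_(i.+1 <= j < m.+1) (1 - 2^+j).
Definition gp m : {poly R} := \sum_(0 <= i < m.+1) c m i *: 'X^(2^i - 1).

Lemma gp_horner m x : (gp m).[x] = \sum_(0 <= i < m.+1) c m i * x ^+ (2^i - 1).
Proof. by rewrite /gp horner_sum; apply: eq_bigr => i _; rewrite hornerZ hornerXn. Qed.

Lemma cS m i : (i <= m)%N -> c m.+1 i = c m i * (1 - 2^+m.+1).
Proof. by move=> h; rewrite /c big_nat_recr //= mulrA. Qed.

Lemma gp1 m : (gp m).[1] = 1.
Proof.
elim: m => [|m IH].
  by rewrite gp_horner big_nat1 /c big_geq // !expr1n !mulr1 expr0.
move: IH; rewrite !gp_horner => IH.
rewrite big_nat_recr //= (@eq_big_nat _ _ _ 0 m.+1 _ (fun i => c m i * 1 ^+ (2 ^ i - 1) * (1 - 2^+m.+1))).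
  by rewrite -mulr_suml IH /c big_geq // expr1n; ring.
by move=> i /andP[_ hi]; rewrite cS //; ring.
Qed.

Lemma deriv_gp m : (gp m.+1)^`() = (2 * (2^+m.+1 - 1)) *: (gp m \Po 'X^2).
Proof.
rewrite /gp raddf_sum big_nat_recl //= derivZ expn0 subnn derivXn mulr0n scaler0 add0r.
rewrite (big_morph (fun p => p \Po ('X^2)) (fun p q => comp_polyD p q _) (comp_poly0 _)) scaler_sumr.
apply: eq_big_nat => i /andP[_ hi].
rewrite derivZ derivXn comp_polyZ comp_Xn_poly -exprM scalerA -scaler_nat scalerA.
have -> : ((2 ^ i.+1 - 1).-1 = 2 * (2 ^ i - 1))%N.
  have := expn_gt0 2 i; rewrite expnS; lia.
congr (_ *: _).
rewrite natrB ?expn_gt0 // natrX.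
transitivity (- 2^+i.+1 * \prod_(i.+1 <= j < m.+2) (1 - 2^+j) : R).
  by rewrite /c [in RHS]big_ltn //=; ring.
by rewrite /c [in LHS]big_nat_recr //= !exprS; ring.
Qed.

Lemma NN_gp m : NN (gp m).
Proof.
elim: m => [|m IH].
  rewrite /NN /sh /gp big_nat1 /c big_geq // expr0 mulr1 subnn expr0 alg_polyC comp_polyC.
  by move=> k; rewrite coefC; case: (k == 0%N).
apply: NN_deriv; first by rewrite gp1.
rewrite deriv_gp; apply: NN_Z; last exact: NN_compX2.
apply: mulr_ge0; first by rewrite ler0n.
by rewrite subr_ge0; apply: exprn_ege1; rewrite ler1n.
Qed.
End S.

Theorem lemma4 (R : realFieldType) (beta : R) (n : nat) :
  1 <= beta -> (0 < n)%N ->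
  \sum_(0 <= i < n.+1)
     ((2 ^+ i : R) * beta ^+ (2 ^ i)%N * \prod_(i <= j < n.+1) (1 - (2 ^+ j : R))) < 0.
Proof.
move=> hb; case: n => [//|m] _.
have E : \sum_(0 <= i < m.+2)
     ((2 ^+ i : R) * beta ^+ (2 ^ i)%N * \prod_(i <= j < m.+2) (1 - (2 ^+ j : R)))
   = 2 * (1 - 2^+m.+1) * beta^+2 * (gp R m).[beta^+2].
  rewrite big_nat_recl // big_ltn //= expr0 subrr mul0r mulr0 add0r.
  rewrite gp_horner mulr_sumr; apply: eq_big_nat => i /andP[_ hi].
  rewrite [in LHS]big_nat_recr //=.
  have -> : beta ^+ (2 ^ i.+1) = beta ^+ 2 * (beta ^+ 2) ^+ (2 ^ i - 1).
    rewrite -exprM -exprD; congr (_ ^+ _).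
    have := expn_gt0 2 i; rewrite expnS; lia.
  rewrite /c !exprS; ring.
rewrite E.
have hb2 : 1 <= beta ^+ 2 by apply: exprn_ege1.
have hg : 0 < (gp R m).[beta^+2].
  apply: (lt_le_trans _ (@NN_horner R (gp R m) (beta^+2) (NN_gp R m) hb2)); rewrite gp1; exact: ltr01.
have hA : 2 * (1 - 2 ^+ m.+1) < 0 :> R.
  rewrite pmulr_rlt0 ?ltr0n // subr_lt0; apply: exprn_egt1 => //; by rewrite ltr1n.
rewrite -mulrA nmulr_rlt0 //; apply: mulr_gt0 => //.
by apply: exprn_gt0; apply: (lt_le_trans ltr01).
Qed.
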